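(* Let $M_1$ and $M_2$ be matroids on a common ground set $E$ with the same rank $r$, and let $B$ be a common basis of $M_1$ and $M_2$. Then $D_{M_1,M_2}(B)$ is strongly connected if and only if $r_{M_1}(X)+r_{M_2}(E\setminus X)>r$ for every $X$ with $\emptyset\neq X\subsetneq E$.
   Context: $r_{M}$ denotes the rank function of $M$. The digraph $D_{M_1,M_2}(B)$ has vertex set $E$; for each $x\in B$, $y\in E\setminus B$ it has an arc $xy$ if $B-x+y$ is a basis of $M_1$, and an arc $yx$ if $B-x+y$ is a basis of $M_2$. *)

(* Defs.v *)
From mathcomp Require Import all_boot.
Set Implicit Arguments. Unset Strict Implicit. Unset Printing Implicit Defensive.

Record matroid (T : finType) := Matroid {
  mindep : {set T} -> bool;
  mindep0 : mindep set0;
  mindep_sub : forall A B : {set T}, A \subset B -> mindep B -> mindep A;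
  mindep_aug : forall A B : {set T}, mindep A -> mindep B -> #|A| < #|B| ->
      exists2 x, x \in B :\: A & mindep (x |: A) }.

Definition mrank (T : finType) (M : matroid T) (X : {set T}) : nat :=
  \max_(Y : {set T} | mindep M Y && (Y \subset X)) #|Y|.

Definition mbasis (T : finType) (M : matroid T) (B : {set T}) : bool :=
  mindep M B && [forall x, (x \notin B) ==> ~~ mindep M (x |: B)].

(* exchange digraph D_{M1,M2}(B) on vertex set T:
   arc x->y if x in B, y notin B, B-x+y basis of M1;
   arc y->x if x in B, y notin B, B-x+y basis of M2. *)
Definition exchange_arc (T : finType) (M1 M2 : matroid T) (B : {set T}) : rel T :=
  fun u v =>
    [&& u \in B, v \notin B & mbasis M1 (v |: (B :\ u))]
    || [&& v \in B, u \notin B & mbasis M2 (u |: (B :\ v))].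

Definition strongly_connected (T : finType) (e : rel T) : Prop :=
  forall u v : T, connect e u v.

(* Main.v *)
Require Import Defs.
From mathcomp Require Import all_boot.
Set Implicit Arguments. Unset Strict Implicit. Unset Printing Implicit Defensive.

Section Mat.
Variables (T : finType) (M : matroid T).

Lemma basisP (B : {set T}) : mbasis M B ->
  mindep M B /\ forall x, x \notin B -> ~~ mindep M (x |: B).
Proof. by case/andP=> iB /forallP H; split=> // x xB; exact: (implyP (H x)). Qed.

Lemma basis_max (B Y : {set T}) : mbasis M B -> mindep M Y -> #|Y| <= #|B|.
Proof.
move=> /basisP [iB mB] iY; rewrite leqNgt; apply/negP=> lt.
have [x /setDP [_ xB] ix] := mindep_aug iB iY lt.
by move: (mB x xB); rewrite ix.
Qed.

Lemma rank_ge (Y X : {set T}) : mindep M Y -> Y \subset X -> #|Y| <= mrank M X.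
Proof.
move=> iY sYX; rewrite /mrank.
by apply: (@leq_bigmax_cond _ (fun Z : {set T} => mindep M Z && (Z \subset X)) (fun Z : {set T} => #|Z|)); rewrite iY.
Qed.

Lemma rank_setT B : mbasis M B -> mrank M [set: T] = #|B|.
Proof.
move=> bB; apply/eqP; rewrite eqn_leq; apply/andP; split.
  by apply/bigmax_leqP=> Y /andP [iY _]; exact: basis_max.
by apply: rank_ge; [case: (basisP bB)| exact: subsetT].
Qed.

Lemma rank_le (B X : {set T}) : mindep M B ->
  (forall y, y \in X -> y \notin B -> ~~ mindep M (y |: (B :&: X))) ->
  mrank M X <= #|B :&: X|.
Proof.
move=> iB H; apply/bigmax_leqP=> Y /andP [iY sYX]; rewrite leqNgt; apply/negP=> lt.
have iBX : mindep M (B :&: X) by apply: (mindep_sub _ iB); exact: subsetIl.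
have [y /setDP [yY yBX] iy] := mindep_aug iBX iY lt.
have yX : y \in X by exact: (subsetP sYX).
have yB : y \notin B by apply: contra yBX => yB; rewrite inE yB.
by move: (H y yX yB); rewrite iy.
Qed.

Lemma exchange (B X : {set T}) y : mbasis M B -> y \notin B -> mindep M (y |: (B :&: X)) ->
  exists2 x, (x \in B) && (x \notin X) & mbasis M (y |: (B :\ x)).
Proof.
move=> bB yB iA; have [iB mB] := basisP bB.
set A := y |: (B :&: X); set S := y |: B.
pose P := fun Z : {set T} => [&& mindep M Z, A \subset Z & Z \subset S].
have PA : P A by rewrite /P iA subxx /A /S setUS // subsetIl.
case: (@arg_maxnP _ A P (fun Z => #|Z|) PA) => Z /and3P [iZ sAZ sZS] maxZ.
have geZ : #|B| <= #|Z|.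
  rewrite leqNgt; apply/negP=> lt.
  have [x /setDP [xB xZ] ix] := mindep_aug iZ iB lt.
  have : P (x |: Z).
    rewrite /P ix (subset_trans sAZ (subsetUr _ _)) /=.
    by rewrite subUset sZS andbT sub1set /S in_setU1 xB orbT.
  move/maxZ; rewrite cardsU1 xZ /=; by rewrite ltnn.
have: ~~ (S \subset Z).
  apply/negP=> sSZ; have eZ : Z = S by apply/eqP; rewrite eqEsubset sZS.
  by move: (mB y yB); rewrite -/S -eZ iZ.
case/subsetPn=> x xS xZ.
have xy : x != y by apply: contra xZ => /eqP ->; apply: (subsetP sAZ); rewrite setU11.
have xB : x \in B by move: xS; rewrite in_setU1 (negbTE xy).
have xX : x \notin X.
  apply: contra xZ => xX; apply: (subsetP sAZ); by rewrite in_setU1 inE xB xX orbT.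
exists x; first by rewrite xB.
set W := y |: (B :\ x).
have sZW : Z \subset W.
  apply/subsetP=> z zZ; have zS := subsetP sZS z zZ.
  rewrite /W in_setU1 in_setD1; move: zS; rewrite in_setU1 => /orP [->//|zB].
  by rewrite zB andbT orbC; apply/orP; left; apply: contra xZ => /eqP <-.
have cW : #|W| = #|B|.
  rewrite /W cardsU1 in_setD1 (negbTE yB) andbF /= (cardsD1 x B) xB.
  by rewrite add1n.
have eZW : Z = W by apply/eqP; rewrite eqEcard sZW cW geZ.
rewrite /mbasis -eZW iZ /=; apply/forallP=> z; apply/implyP=> zZ; apply/negP=> iz.
have := basis_max bB iz; rewrite cardsU1 zZ eZW cW /=; by rewrite ltnn.
Qed.

End Mat.

Lemma no_cross (T : finType) (e : rel T) (X : {set T}) :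
  (forall a b, e a b -> a \notin X -> b \notin X) ->
  forall u v, connect e u v -> u \notin X -> v \notin X.
Proof.
move=> H u v /connectP [p pe ->]; elim: p u pe => [|a p IH] u //= /andP [eua pe] uX.
exact: (IH a pe (H u a eua uX)).
Qed.

Theorem lemma3p12 (T : finType) (M1 M2 : matroid T) (r : nat)
  (hr1 : mrank M1 [set: T] = r) (hr2 : mrank M2 [set: T] = r)
  (B : {set T}) (hB1 : mbasis M1 B) (hB2 : mbasis M2 B) :
  strongly_connected (exchange_arc M1 M2 B) <->
  (forall X : {set T}, X != set0 -> X \proper [set: T] ->
     mrank M1 X + mrank M2 (~: X) > r).
Proof.
have rB : r = #|B| by rewrite -hr1; exact: rank_setT.
have [iB1 mB1] := basisP hB1; have [iB2 mB2] := basisP hB2.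
have cardB X : #|B :&: X| + #|B :&: ~: X| = #|B|.
  by rewrite -setDE cardsID.
split.
- move=> sc X X0 XP; rewrite ltnNge; apply/negP=> le.
  have g1 : #|B :&: X| <= mrank M1 X.
    by apply: rank_ge; [apply: (mindep_sub _ iB1); exact: subsetIl | exact: subsetIr].
  have g2 : #|B :&: ~: X| <= mrank M2 (~: X).
    by apply: rank_ge; [apply: (mindep_sub _ iB2); exact: subsetIl | exact: subsetIr].
  have e1 : mrank M1 X = #|B :&: X|.
    apply/eqP; rewrite eqn_leq g1 andbT -(leq_add2r (#|B :&: ~: X|)) cardB -rB.
    by apply: leq_trans le; rewrite leq_add2l.
  have e2 : mrank M2 (~: X) = #|B :&: ~: X|.
    apply/eqP; rewrite eqn_leq g2 andbT -(leq_add2l (#|B :&: X|)) cardB -rB.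
    by apply: leq_trans le; rewrite leq_add2r.
  have [v vX] : exists v, v \in X by case/set0Pn: X0 => v; exists v.
  have [u uX] : exists u, u \notin X.
    by case/properP: XP => _ [u _ uX]; exists u.
  suff Hc : forall a b, exchange_arc M1 M2 B a b -> a \notin X -> b \notin X.
    by move: (no_cross Hc (sc u v) uX); rewrite vX.
  move=> a b /orP [/and3P [aB bB bas] | /and3P [bB aB bas]] aX; apply/negP=> bX.
  + have i : mindep M1 (b |: (B :&: X)).
      apply: (mindep_sub _ (proj1 (basisP bas))); apply: setUS.
      apply/subsetP=> z /setIP [zB zX]; rewrite in_setD1 zB andbT.
      by apply: contra aX => /eqP <-.
    have sb : b |: (B :&: X) \subset X by rewrite subUset sub1set bX subsetIr.
    by move: (rank_ge i sb); rewrite e1 cardsU1 inE (negbTE bB) /= ltnn.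
  + have i : mindep M2 (a |: (B :&: ~: X)).
      apply: (mindep_sub _ (proj1 (basisP bas))); apply: setUS.
      apply/subsetP=> z /setIP [zB zX]; rewrite in_setD1 zB andbT.
      by apply: contraTneq zX => ->; rewrite inE bX.
    have sb : a |: (B :&: ~: X) \subset ~: X by rewrite subUset sub1set inE aX subsetIr.
    by move: (rank_ge i sb); rewrite e2 cardsU1 inE (negbTE aB) /= ltnn.
- move=> H u v; apply/idPn=> nuv.
  set e := exchange_arc M1 M2 B.
  set X := [set w | connect e w v].
  have vX : v \in X by rewrite inE connect0.
  have uX : u \notin X by rewrite inE.
  have cl a b : e a b -> b \in X -> a \in X.
    by move=> eab; rewrite !inE => bv; exact: connect_trans (connect1 eab) bv.
  have X0 : X != set0 by apply/set0Pn; exists v.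
  have XP : X \proper [set: T] by apply/properP; split; [exact: subsetT | exists u].
  have := H X X0 XP; rewrite ltnNge => /negP; apply.
  rewrite rB -(cardB X); apply: leq_add.
  + apply: rank_le => // y yX yB; apply/negP=> iy.
    have [x /andP [xB xX] bas] := exchange hB1 yB iy.
    have : e x y by rewrite /e /exchange_arc xB yB bas.
    by move/cl/(_ yX); rewrite (negbTE xX).
  + apply: rank_le => // y yX yB; apply/negP=> iy.
    have [x /andP [xB xX] bas] := exchange hB2 yB iy.
    rewrite inE negbK in xX.
    have : e y x by rewrite /e /exchange_arc xB yB bas orbT.
    by move/cl/(_ xX); rewrite inE in yX; rewrite (negbTE yX).
Qed.
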